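(* Let $d$ be even and let $A$ be a concave linear Nakayama algebra which is a higher Auslander algebra of global dimension $d$. Let $I$ be an indecomposable injective, non-projective $A$-module of length $m\ge2$. Then $\operatorname{pd}I=d$ and $I$ is plus-strictly-increasing; explicitly, $\operatorname{char}I=(d,c_2,\dots,c_m)$ with $c_2<c_3<\cdots<c_m<d$ odd numbers.
   Context: Conventions: $k$ a field; linear Nakayama algebras are basic $kQ/I$ with $Q$ a linearly oriented path; modules finitely generated left, indecomposables uniserial. Even/odd indecomposable: parity of $\operatorname{pd}$. For indecomposable $M$ with composition factors $F_1=\operatorname{soc}M,\dots,F_m=\operatorname{top}M$, $\operatorname{char}M=(z_1,\dots,z_m)$ with $z_i=\operatorname{pd}F_i$ if $F_i$ odd, $z_i=\operatorname{pd}M$ if $F_i$ even. Concave: Kupisch series weakly increasing then weakly decreasing. Higher Auslander algebra: global dimension = dominant dimension. An indecomposable module $Y$ is plus-strictly-increasing if $\operatorname{char}Y=(e,c_2,\dots,c_m)$ with $e$ even and $c_2<\cdots<c_m<e$ odd. *)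

(* Defs.v *)
(* Combinatorial model of the module category of a
   linear Nakayama algebra A = kQ/I (Q linearly oriented path, I admissible),
   which is independent of the field k.

   Vertices/simples are 0 .. n-1.  The Kupisch series is c = [:: c_0; ...; c_{n-1}],
   c_i = length of the indecomposable projective P_i (top S_i, composition
   factors S_i, S_{i+1}, ..., S_{i+c_i-1} from top to socle).
   Every indecomposable (uniserial) module is M(t,l) = P_t / rad^l P_t, encoded
   as the pair (t,l) with t < n and 1 <= l <= c_t: top S_t, socle S_{t+l-1},
   length l. *)
From mathcomp Require Import all_boot.
Set Implicit Arguments.
Unset Strict Implicit.
Unset Printing Implicit Defensive.

Definition kup (c : seq nat) (i : nat) : nat := nth 0 c i.

Definition kupisch_series (c : seq nat) : bool :=
  [&& 0 < size c, last 0 c == 1,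
      all (fun i => 2 <= kup c i) (iota 0 (size c).-1) &
      all (fun i => (kup c i).-1 <= kup c i.+1) (iota 0 (size c).-1)].

Definition concave (c : seq nat) : Prop :=
  exists k, (forall i j, i <= j -> j <= k -> j < size c -> kup c i <= kup c j) /\
            (forall i j, k <= i -> i <= j -> j < size c -> kup c j <= kup c i).

Definition module := (nat * nat)%type.   (* (top, length) *)

Definition valid (c : seq nat) (M : module) : bool :=
  (M.1 < size c) && (0 < M.2 <= kup c M.1).

Definition mlength (M : module) : nat := M.2.

Definition is_proj (c : seq nat) (M : module) : bool := M.2 == kup c M.1.

(* M is injective iff it is not a proper submodule of an indecomposable,
   i.e. M(t-1, l+1) does not exist *)
Definition is_inj (c : seq nat) (M : module) : bool :=
  (M.1 == 0) || (kup c M.1.-1 <= M.2).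

(* syzygy (kernel of the projective cover P_t -> M(t,l)); None = zero module *)
Definition omega (c : seq nat) (M : module) : option module :=
  if M.2 < kup c M.1 then Some (M.1 + M.2, kup c M.1 - M.2) else None.

Definition omega_opt (c : seq nat) (o : option module) : option module :=
  if o is Some M then omega c M else None.

Definition syz (c : seq nat) (k : nat) (M : module) : option module :=
  iter k (omega_opt c) (Some M).

(* projective dimension: least k with Omega^{k+1} M = 0.  If pd M is finite,
   the modules M, Omega M, ..., Omega^{pd M} M are pairwise distinct nonzero
   indecomposables, so pd M < sumn c (the number of indecomposables); hence the
   bounded search below returns the true pd whenever it is finite. *)
Definition pd (c : seq nat) (M : module) : nat :=
  find (fun k => syz c k.+1 M == None) (iota 0 (sumn c)).

Definition gldim_eq (c : seq nat) (d : nat) : Prop :=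
  (forall M, valid c M -> syz c d.+1 M = None) /\
  (exists M, valid c M /\ syz c d M <> None).

(* top of the indecomposable injective I_s with socle S_s: least t with
   M(t, s-t+1) existing, i.e. s < t + c_t *)
Definition inj_top (c : seq nat) (s : nat) : nat :=
  find (fun t => s < t + kup c t) (iota 0 s.+1).

Definition env (c : seq nat) (M : module) : module :=
  let s := (M.1 + M.2).-1 in (inj_top c s, s.+1 - inj_top c s).

Definition cosyz (c : seq nat) (M : module) : option module :=
  let t' := inj_top c (M.1 + M.2).-1 in
  if t' < M.1 then Some (t', M.1 - t') else None.

Definition cosyz_opt (c : seq nat) (o : option module) : option module :=
  if o is Some M then cosyz c M else None.

Definition cosyz_iter (c : seq nat) (k : nat) (M : module) : option module :=
  iter k (cosyz_opt c) (Some M).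

(* dominant dimension of A is >= k: for every indecomposable projective P_i,
   the terms I^0, ..., I^{k-1} of its minimal injective coresolution are
   projective (I^j = injective envelope of the j-th cosyzygy; zero terms are
   trivially projective) *)
Definition domdim_ge (c : seq nat) (k : nat) : Prop :=
  forall i, i < size c -> forall j, j < k ->
    match cosyz_iter c j (i, kup c i) with
    | None => true
    | Some N => is_proj c (env c N)
    end.

Definition higher_auslander (c : seq nat) (d : nat) : Prop :=
  gldim_eq c d /\ domdim_ge c d /\ ~ domdim_ge c d.+1.

Definition simple (v : nat) : module := (v, 1).

(* char M = (z_1, ..., z_m), F_1 = soc M = S_{t+l-1}, ..., F_m = top M = S_t;
   F_i = S_{t+l-i}.  z_i = pd F_i if F_i odd, z_i = pd M if F_i even. *)
Definition charz (c : seq nat) (M : module) : seq nat :=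
  [seq (if odd (pd c (simple (M.1 + M.2 - i))) then pd c (simple (M.1 + M.2 - i))
        else pd c M) | i <- iota 1 M.2].

Definition plus_strictly_increasing (c : seq nat) (Y : module) : bool :=
  let z := charz c Y in
  [&& ~~ odd (head 0 z), all odd (behead z), sorted ltn (behead z) &
      all (fun x => x < head 0 z) (behead z)].

(* Main.v *)
Require Import Defs.
From mathcomp Require Import all_boot zify.
Set Implicit Arguments.
Unset Strict Implicit.
Unset Printing Implicit Defensive.

Lemma size_le_sumn (s : seq nat) : (forall i, i < size s -> 0 < nth 0 s i) -> size s <= sumn s.
Proof.
elim: s => //= x s IH H.
have Hx : 0 < x := H 0 isT. have Hs : forall i, i < size s -> 0 < nth 0 s i.
  by move=> i Hi; exact: (H i.+1).
have := IH Hs. lia.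
Qed.

Lemma par i : exists m, i = m.*2 \/ i = m.*2.+1.
Proof.
exists i./2. have := odd_double_half i. case: (odd i) => /= H; [right|left]; lia.
Qed.

Section Basics.
Variable c : seq nat.
Hypothesis Kc : kupisch_series c.
Local Notation n := (size c).
Definition g x := x + kup c x.
Definition h b := inj_top c b.-1.
Local Notation gi k x := (iter k g x).

Lemma n_pos : 0 < n.
Proof. by case/and4P: Kc. Qed.

Lemma kup_last : kup c n.-1 = 1.
Proof. case/and4P: Kc => H1 /eqP H2 _ _. by rewrite /kup nth_last H2. Qed.

Lemma kup_ge2 i : i < n.-1 -> 2 <= kup c i.
Proof. case/and4P: Kc => _ _ /allP H _ Hi. apply: H. by rewrite mem_iota. Qed.

Lemma kup_step i : i < n.-1 -> (kup c i).-1 <= kup c i.+1.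
Proof. case/and4P: Kc => _ _ _ /allP H Hi. apply: (H i); by rewrite mem_iota. Qed.

Lemma kup_pos i : i < n -> 0 < kup c i.
Proof.
move=> Hi. case: (ltnP i n.-1) => H; first by have := kup_ge2 H; lia.
have -> : i = n.-1 by lia. by rewrite kup_last.
Qed.

Lemma kup_out i : n <= i -> kup c i = 0.
Proof. by move=> H; rewrite /kup nth_default. Qed.

Lemma g_step x : g x <= g x.+1.
Proof.
rewrite /g. case: (ltnP x n.-1) => H.
  have := kup_step H; have := kup_ge2 H; lia.
case: (ltnP x n) => H2.
  have Hx : x = n.-1 by lia.
  rewrite (kup_out (i:=x.+1)); last by lia.
  rewrite Hx kup_last; lia.
rewrite !kup_out; lia.
Qed.

Lemma g_mono : {homo g : x y / x <= y}.
Proof. apply: homo_leq => //; [exact: leq_trans | exact: g_step]. Qed.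

Lemma g_gt x : x < n -> x < g x.
Proof. move=> H; have := kup_pos H; rewrite /g; lia. Qed.

Lemma g_ge x : x <= g x.
Proof. rewrite /g; lia. Qed.

Lemma g_id x : n <= x -> g x = x.
Proof. by move=> H; rewrite /g kup_out ?addn0. Qed.

Lemma g_last : g n.-1 = n.
Proof. rewrite /g kup_last; have := n_pos; lia. Qed.

Lemma g_le_n x : x <= n -> g x <= n.
Proof.
move=> H; case: (ltnP x n) => H2.
  have : g x <= g n.-1 by apply: g_mono; lia.
  by rewrite g_last.
have -> : x = n by lia. by rewrite g_id.
Qed.

Lemma gi_mono k : {homo (fun x => gi k x) : x y / x <= y}.
Proof. elim: k => //= k IH x y H. apply: g_mono. exact: IH. Qed.

Lemma gi_le_n k x : x <= n -> gi k x <= n.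
Proof. elim: k => //= k IH H. apply: g_le_n. exact: IH. Qed.

Lemma gi_ge k x : x <= gi k x.
Proof. elim: k => //= k IH. exact: leq_trans IH (g_ge _). Qed.

Lemma h_spec b : 0 < b <= n -> h b < b /\ b <= g (h b) /\ forall y, b <= g y -> h b <= y.
Proof.
move=> /andP [H0 Hn]. rewrite /h /inj_top.
set P := (fun t => b.-1 < t + kup c t).
have HP : has P (iota 0 b.-1.+1).
  apply/hasP; exists b.-1; first by rewrite mem_iota; lia.
  rewrite /P. have := g_gt (x:=b.-1). rewrite /g. lia.
have Hf := find_size P (iota 0 b.-1.+1). rewrite size_iota in Hf.
have Hlt : find P (iota 0 b.-1.+1) < b.-1.+1 by have := HP; rewrite has_find size_iota.
split; first by lia.
split.
  have := nth_find 0 HP. rewrite nth_iota // /P /g add0n. lia.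
move=> y Hy. case: (ltnP y (find P (iota 0 b.-1.+1))) => // Hlty.
have := before_find 0 Hlty. rewrite nth_iota; last by lia.
rewrite /P add0n. move: Hy; rewrite /g. lia.
Qed.

Lemma h_adj b y : 0 < b <= n -> (h b <= y) = (b <= g y).
Proof.
move=> Hb; have [_ [H1 H2]] := h_spec Hb.
apply/idP/idP => H; last exact: H2.
apply: leq_trans H1 _. exact: g_mono.
Qed.

Lemma h_lt b : 0 < b <= n -> h b < b.
Proof. by move=> Hb; have [] := h_spec Hb. Qed.

Lemma h_g b : 0 < b <= n -> b <= g (h b).
Proof. by move=> Hb; have [_ []] := h_spec Hb. Qed.

Lemma h_mono a b : 0 < a -> a <= b -> b <= n -> h a <= h b.
Proof.
move=> Ha Hab Hb. have Ha' : 0 < a <= n by lia. rewrite h_adj //.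
have Hb2 : 0 < b <= n by lia. have := h_g Hb2. lia.
Qed.

Lemma h_gx x : x < n -> h (g x) <= x.
Proof. move=> Hx. have := g_gt Hx; have := g_le_n (ltnW Hx) => H1 H2. rewrite h_adj //. lia. Qed.

Lemma n_le_sumn : n <= sumn c.
Proof. apply: size_le_sumn => i Hi. exact: kup_pos. Qed.

Fixpoint ych (p q k : nat) : nat :=
  match k with 0 => p | k'.+1 => match k' with 0 => q | k''.+1 => g (ych p q k'') end end.

Lemma ychSS p q k : ych p q k.+2 = g (ych p q k). Proof. by []. Qed.

Lemma ych_even p q m : ych p q m.*2 = gi m p.
Proof. elim: m => // m IH. by rewrite doubleS ychSS IH iterS. Qed.

Lemma ych_odd p q m : ych p q m.*2.+1 = gi m q.
Proof. elim: m => // m IH. by rewrite doubleS ychSS IH iterS. Qed.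

Definition strict p q k := all (fun i => ych p q i.+1 < ych p q i.+2) (iota 0 k).

Lemma strictS p q k : strict p q k.+1 = strict p q k && (ych p q k.+1 < ych p q k.+2).
Proof. by rewrite /strict -[k.+1]addn1 iotaD all_cat add0n /= -/(ych p q k.+1) -/(ych p q k.+2) andbT addn1. Qed.

Lemma strictP p q k : reflect (forall i, i < k -> ych p q i.+1 < ych p q i.+2) (strict p q k).
Proof.
apply: (iffP allP) => H i Hi.
  apply: H. by rewrite mem_iota.
apply: H. by move: Hi; rewrite mem_iota.
Qed.

Lemma ych_le p q k : p <= q -> strict p q k -> ych p q k <= ych p q k.+1.
Proof.
case: k => // k Hpq. rewrite strictS => /andP [_ H]. exact: ltnW.
Qed.

Lemma syzE p q k : p <= q ->
  syz c k (p, q - p) =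
  if strict p q k then Some (ych p q k, ych p q k.+1 - ych p q k) else None.
Proof.
move=> Hpq. elim: k => [|k IH]; first by [].
rewrite /syz iterS -/(syz c k (p, q - p)) IH strictS.
case Hs: (strict p q k) => //.
have Hle := ych_le Hpq Hs.
rewrite ychSS. move: (ych p q k) (ych p q k.+1) Hle => a b Hle.
rewrite /omega_opt /omega /= /g.
case: ifP => H1; case: ifP => H2 //.
- congr Some. congr pair; lia.
- exfalso. move: H1 H2. lia.
- exfalso. move: H1 H2. lia.
Qed.

Lemma ych_le_n p q k : p <= n -> q <= n -> ych p q k <= n.
Proof.
move=> Hp Hq. elim: k {-2}k (leqnn k) => [|k IH] [|[|j]] //= Hj.
  apply: g_le_n. apply: IH. lia.
Qed.

Lemma ych_grow p q k : strict p q k -> q + k <= ych p q k.+1.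
Proof.
elim: k => [|k IH]; first by rewrite addn0.
rewrite strictS => /andP [Hs H]. have := IH Hs. lia.
Qed.

Lemma syz_None_mono M k k' : syz c k M = None -> k <= k' -> syz c k' M = None.
Proof.
move=> H Hk. rewrite -(subnK Hk) /syz iterD -/(syz c k M) H.
by elim: (k' - k) => //= j ->.
Qed.

Lemma pdE p q k : p < n -> p < q -> q <= g p ->
  syz c k.+1 (p, q - p) = None -> syz c k (p, q - p) <> None -> pd c (p, q - p) = k.
Proof.
move=> Hp Hpq Hq HN HS.
have Hqn : q <= n by apply: leq_trans Hq (g_le_n (ltnW Hp)).
have Hk : k < sumn c.
  move: HS. rewrite syzE ?(ltnW Hpq) //. case Hs: (strict p q k) => // _.
  have := ych_grow Hs. have := ych_le_n k.+1 (ltnW (leq_trans Hp (leqnn n))) Hqn.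
  have := n_le_sumn. lia.
rewrite /pd.
set P := (fun j => syz c j.+1 (p, q - p) == None).
have HP : has P (iota 0 (sumn c)).
  apply/hasP; exists k; first by rewrite mem_iota; lia.
  by rewrite /P HN.
have Hf : find P (iota 0 (sumn c)) < sumn c by have := HP; rewrite has_find size_iota.
have H1 := nth_find 0 HP. rewrite nth_iota // add0n /P in H1.
case: (ltngtP (find P (iota 0 (sumn c))) k) => // H2.
- exfalso. apply: HS. apply: syz_None_mono (eqP H1) _. exact: H2.
- have := before_find 0 H2. rewrite nth_iota // add0n /P HN. by [].
Qed.

Fixpoint wch (x k : nat) : nat :=
  match k with 0 => g x | k'.+1 => match k' with 0 => x | k''.+1 => h (wch x k'') end end.

Lemma wchSS x k : wch x k.+2 = h (wch x k). Proof. by []. Qed.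

Definition cstrict x k := all (fun j => wch x j.+2 < wch x j.+1) (iota 0 k).

Lemma cstrictS x k : cstrict x k.+1 = cstrict x k && (wch x k.+2 < wch x k.+1).
Proof.
rewrite /cstrict -[k.+1]addn1 iotaD all_cat add0n /=.
by rewrite -/(wch x k.+2) -/(wch x k.+1) andbT addn1.
Qed.

Lemma cstrictP x k : reflect (forall i, i < k -> wch x i.+2 < wch x i.+1) (cstrict x k).
Proof.
apply: (iffP allP) => H i Hi.
  apply: H. by rewrite mem_iota.
apply: H. by move: Hi; rewrite mem_iota.
Qed.

Lemma wch_le x k : cstrict x k -> wch x k.+1 <= wch x k.
Proof.
case: k => [_|k]; first exact: g_ge.
rewrite cstrictS => /andP [_ H]. exact: ltnW.
Qed.

Lemma cosyzE x k :
  cosyz_iter c k (x, kup c x) =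
  if cstrict x k then Some (wch x k.+1, wch x k - wch x k.+1) else None.
Proof.
elim: k => [|k IH].
  rewrite /cosyz_iter /=. congr (Some (x, _)). rewrite /g; lia.
rewrite /cosyz_iter iterS -/(cosyz_iter c k (x, kup c x)) IH cstrictS.
case Hs: (cstrict x k) => //.
have Hle := wch_le Hs.
rewrite wchSS. move: (wch x k) (wch x k.+1) Hle => b a Hle.
rewrite /cosyz_opt /cosyz /=.
have -> : a + (b - a) = b by lia.
rewrite -/(h b). by case: ifP.
Qed.

Lemma h0 : h 0 = 0.
Proof.
rewrite /h /inj_top /=. have := kup_pos n_pos. rewrite /kup. case Ec: c => [|a s] //= ->. by [].
Qed.

Lemma h_le b : b <= n -> h b <= b.
Proof.
case: b => [_|b Hb]; first by rewrite h0.
apply: ltnW. apply: h_lt. lia.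
Qed.

Lemma wch_le_n x k : x < n -> wch x k <= n.
Proof.
move=> Hx. elim: k {-2}k (leqnn k) => [|k IH] [|[|j]] //= Hj.
- exact: g_le_n (ltnW Hx).
- exact: g_le_n (ltnW Hx).
- exact: ltnW.
- apply: leq_trans (h_le _) _; apply: IH; lia.
Qed.

Lemma env_proj a b : a <= b -> 0 < b -> b <= n ->
  is_proj c (env c (a, b - a)) = (g (h b) == b).
Proof.
move=> Hab Hb Hbn. rewrite /env /is_proj /=.
have -> : a + (b - a) = b by lia.
rewrite -/(h b) prednK //. have := h_lt (b:=b). rewrite /g.
move=> H. have {H} H : h b < b by apply: H; lia.
apply/eqP/eqP; lia.
Qed.

Lemma dom_rel d x j : domdim_ge c d -> x < n -> j < d -> cstrict x j ->
  g (wch x j.+2) = wch x j.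
Proof.
move=> Hd Hx Hj Hs. have := Hd x Hx j Hj. rewrite cosyzE Hs.
have Hle := wch_le Hs.
have Hpos : 0 < wch x j.
  case: j Hj Hs Hle => [|j] Hj Hs Hle; first by have := g_gt Hx; rewrite /=; lia.
  move: Hs; rewrite cstrictS => /andP [_ H]. lia.
rewrite env_proj //; last exact: wch_le_n.
by move/eqP.
Qed.



Lemma ychE p q i : ych p q i = if odd i then gi i./2 q else gi i./2 p.
Proof.
rewrite -{1}(odd_double_half i). case: (odd i).
- by rewrite add1n ych_odd.
- by rewrite add0n ych_even.
Qed.

Variable d : nat.
Hypothesis Hgl : forall M, valid c M -> syz c d.+1 M = None.
Hypothesis Hdom : domdim_ge c d.

Lemma valid_pair p q : p < n -> p < q -> q <= g p -> valid c (p, q - p).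
Proof.
move=> Hp Hpq Hq. rewrite /valid /= Hp /=. move: Hq; rewrite /g => Hq. apply/andP; split; lia.
Qed.

Lemma gl_strict p q : p < n -> p < q -> q <= g p -> ~~ strict p q d.+1.
Proof.
move=> Hp Hpq Hq. have HV : valid c (p, q - p).
  rewrite /valid /= Hp /=. move: Hq; rewrite /g => Hq. apply/andP; split; lia.
have := Hgl HV. rewrite syzE ?(ltnW Hpq) //. by case: (strict p q d.+1).
Qed.



Lemma gl_exists p q : p < n -> p < q -> q <= g p ->
  exists i, i <= d /\ ych p q i.+2 <= ych p q i.+1.
Proof.
move=> Hp Hpq Hq. have := gl_strict Hp Hpq Hq. rewrite /strict.
move/allPn => [i Hi H]. exists i. move: Hi H; rewrite mem_iota. lia.
Qed.

Hypothesis Hev : ~~ odd d.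
Local Notation r := d./2.
Lemma dE : d = r.*2.
Proof. by rewrite -{1}(odd_double_half d) (negbTE Hev) add0n. Qed.
Hypothesis Hd0 : 0 < d.

Section NIchain.
Variable x : nat.
Hypothesis Hx0 : 0 < x.
Hypothesis Hxn : x < n.
Hypothesis Hxg : g x.-1 = g x.
Local Notation w := (wch x).

Lemma F1 k : k <= d -> forall i, i <= k -> w i.+1 < w i.
Proof.
elim: k => [_ i|k IH Hk i Hi].
  rewrite leqn0 => /eqP ->. exact: g_gt.
case: (ltnP i k.+1) => Hik; first by apply: IH; lia.
have -> : i = k.+1 by lia.
case: k IH Hk Hi Hik => [|k] IH Hk Hi Hik.
  rewrite /= -/(g x). have Hgx : 0 < g x <= n.
    have := g_gt Hxn; have := g_le_n (ltnW Hxn); lia.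
  have : h (g x) <= x.-1 by rewrite h_adj // Hxg.
  lia.
have Hcs : forall j, j <= k.+1 -> cstrict x j.
  move=> j Hj. apply/cstrictP => i0 Hi0. apply: IH; lia.
have E1' := dom_rel Hdom Hxn Hk (Hcs _ (leqnn _)).
have E2' := dom_rel Hdom Hxn (ltnW Hk) (Hcs k (leqnSn _)).
rewrite ltnNge. apply/negP => Hle.
have := IH (ltnW Hk) k (leqnSn _).
have : g (w k.+2) <= g (w k.+3) by apply: g_mono.
rewrite E1' ?E2'; try lia.
Qed.

Lemma F2 k : k < d -> g (w k.+2) = w k.
Proof.
move=> Hk. apply: (dom_rel Hdom Hxn Hk). apply/cstrictP => i Hi. exact: (F1 (ltnW Hk) Hi).
Qed.

Lemma wpos k : k <= d -> 0 < w k.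
Proof. move=> Hk. have := F1 Hk (leqnn k). lia. Qed.

Lemma wlen k : w k <= n.
Proof. exact: wch_le_n. Qed.

Lemma gi_w m k : k + m.*2 <= d.+1 -> gi m (w (k + m.*2)) = w k.
Proof.
elim: m k => [|m IH] k Hk; first by rewrite addn0.
rewrite iterS doubleS -(addSnnS k) -addSnnS IH; last by lia.
apply: F2. lia.
Qed.



Lemma gi_w' m j : m.*2 <= j -> j <= d.+1 -> gi m (w j) = w (j - m.*2).
Proof. move=> H1 H2. have := gi_w (m:=m) (k:=j - m.*2). rewrite subnK //. by apply. Qed.


Lemma F3 : h (w d) = w d.+1.
Proof.
have Hwd : 0 < w d <= n by rewrite wpos // wlen.
have E1 : g (w d.+1) = w d.-1.
  have := F2 (k:=d.-1). rewrite prednK //. apply. lia.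
have L1 : w d < w d.-1.
  have := F1 (leqnn d) (i:=d.-1). rewrite prednK //. apply. lia.
set p0 := h (w d).
have Hp0 : p0 < w d by apply: h_lt.
have Hgp0 : w d <= g p0 by apply: h_g.
have Hle : p0 <= w d.+1 by rewrite /p0 h_adj // E1; lia.
have Hwd1 : w d.+1 < w d := F1 (leqnn d) (leqnn d).
case: (ltngtP p0 (w d.+1)) Hle => // Hlt _.
exfalso.
have A : forall m, m <= r -> gi m p0 < gi m (w d.+1).
  elim=> [//|m IH Hm].
  have IH' := IH (ltnW Hm).
  rewrite !iterS. rewrite ltnNge. apply/negP => Hg.
  have Hb : gi m (w d.+1) = w ((d.+1 - m.*2 - 2).+2).
    rewrite gi_w'; [congr w|..]; have := dE; lia.
  have Hgb : g (gi m (w d.+1)) = w (d.+1 - m.*2 - 2).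
    rewrite Hb F2 //. have := dE; lia.
  have Hpos : 0 < w (d.+1 - m.*2 - 2) <= n.
    rewrite wlen andbT. apply: wpos. lia.
  have : h (g (gi m (w d.+1))) <= gi m p0.
    rewrite h_adj Hgb // -Hgb. exact: Hg.
  rewrite Hgb -wchSS -Hb. lia.
have Hp0n : p0 < n by lia.
have Hw1 : w d.+1 <= g p0 by lia.
have [i [Hi Hc]] := gl_exists Hp0n Hlt Hw1.
have [m [Em|Em]] := par i; subst i.
- move: Hc. rewrite !ychSS ych_odd ych_even.
  have Hm : m <= r by have := dE; lia.
  have B1 : gi m (w d.+1) = w (d.+1 - m.*2) by rewrite gi_w' //; have := dE; lia.
  have B2 : gi m (w d) <= gi m (g p0) by apply: gi_mono.
  rewrite -iterS iterSr.
  have B3 : gi m (w d) = w (d - m.*2) by rewrite gi_w' //; lia.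
  have L : w (d - m.*2).+1 < w (d - m.*2) := F1 (leqnn d) (leq_subr _ _).
  have E : d.+1 - m.*2 = (d - m.*2).+1 by lia.
  rewrite B1 E. rewrite B3 in B2. lia.
- move: Hc. rewrite !ychSS ych_odd ych_even.
  have Hm : m.+1 <= r by have := dE; lia.
  have := A _ Hm. rewrite !iterS. lia.
Qed.

Lemma E1 : g (w d.+1) = w d.-1.
Proof. have := F2 (k:=d.-1). rewrite prednK //. apply. lia. Qed.

Lemma L1 : w d < w d.-1.
Proof. have := F1 (leqnn d) (i:=d.-1). rewrite prednK //. apply. lia. Qed.

Lemma Phi_range : 0 < w d <= n.
Proof. by rewrite wpos // wlen. Qed.

Lemma Phi_notim y : g y != w d.
Proof.
apply/eqP => Hy. have Hr := Phi_range.
have H1 : h (w d) <= y by rewrite h_adj // Hy.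
have H2 : w d <= g (h (w d)) := h_g Hr.
have H3 : g (h (w d)) <= g y := g_mono H1.
rewrite F3 E1 in H2 H3. have := L1. lia.
Qed.

Lemma Phi_back : gi r (h (w d)) = x.
Proof.
rewrite F3. have := gi_w (m:=r) (k:=1). rewrite -dE add1n. by apply.
Qed.

Lemma Phi_proj : g (h (w d)) != w d.
Proof. rewrite F3 E1. have := L1. lia. Qed.

End NIchain.

Definition NI := [seq y <- iota 1 n.-1 | g y.-1 == g y].
Definition IM := [seq g y | y <- iota 0 n].
Definition IN := [seq b <- iota 1 n | b \notin IM].
Definition FF := [seq y <- iota 0 n | (y == 0) || (g y.-1 != g y)].

Lemma NI_spec y : (y \in NI) = [&& 0 < y, y < n & g y.-1 == g y].
Proof.
rewrite /NI mem_filter mem_iota. have := n_pos.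
case: (g y.-1 == g y); rewrite ?andbF ?andbT //= => H.
apply/idP/idP; move/andP => [H1 H2]; apply/andP; split; lia.
Qed.

Lemma size_FF_NI : size FF + size NI = n.
Proof.
have Hn := n_pos.
have E : iota 0 n = 0 :: iota 1 n.-1 by rewrite -{1}(prednK Hn).
rewrite /FF /NI E /= !size_filter.
set s := iota 1 n.-1.
have -> : count (fun y => (y == 0) || (g y.-1 != g y)) s = count (fun y => g y.-1 != g y) s.
  apply: eq_in_count => y. rewrite /s mem_iota. by case: y.
have := count_predC (fun y => g y.-1 == g y) s.
rewrite size_iota.
have -> : count (predC (fun y => g y.-1 == g y)) s = count (fun y => g y.-1 != g y) s by [].
lia.
Qed.

Lemma FF_spec y : (y \in FF) = (y < n) && ((y == 0) || (g y.-1 != g y)).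
Proof. by rewrite /FF mem_filter mem_iota add0n andbC. Qed.

Lemma FF_inj : {in FF &, injective g}.
Proof.
have key : forall y1 y2, y1 \in FF -> y2 \in FF -> y1 < y2 -> g y1 = g y2 -> False.
  move=> y1 y2 _ H2 Hlt Heq. move: H2; rewrite FF_spec => /andP [_ /orP [/eqP E|/eqP E]].
    lia.
  apply: E. apply/eqP; rewrite eqn_leq g_mono ?leq_pred //= -Heq. apply: g_mono. lia.
move=> y1 y2 H1 H2 Heq. case: (ltngtP y1 y2) => // Hlt; exfalso.
  exact: key H1 H2 Hlt Heq.
exact: key H2 H1 Hlt (esym Heq).
Qed.

Lemma IM_spec b : (b \in IM) = (b \in [seq g y | y <- FF]).
Proof.
apply/idP/idP => /mapP [y Hy ->].
- rewrite mem_iota add0n in Hy. move: Hy => /andP [_ Hy].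
  have Hb : 0 < g y <= n by have := g_gt Hy; have := g_le_n (ltnW Hy); lia.
  have Hz : h (g y) <= y by rewrite h_adj.
  have Hgz : g (h (g y)) = g y.
    apply/eqP; rewrite eqn_leq g_mono // h_g //.
  apply/mapP; exists (h (g y)) => //.
  rewrite FF_spec. apply/andP; split; first by lia.
  case E: (h (g y)) => [//|z] /=. apply/eqP => E2.
  have : h (g y) <= z by rewrite h_adj // E2 -E Hgz.
  lia.
- apply/mapP; exists y => //. rewrite FF_spec in Hy. rewrite mem_iota. lia.
Qed.

Lemma size_IN : size IN = size NI.
Proof.
have Hu1 : uniq [seq b <- iota 1 n | b \in IM] by rewrite filter_uniq // iota_uniq.
have Hu2 : uniq [seq g y | y <- FF].
  rewrite map_inj_in_uniq ?filter_uniq ?iota_uniq //. exact: FF_inj.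
have Heq : [seq b <- iota 1 n | b \in IM] =i [seq g y | y <- FF].
  move=> b. rewrite mem_filter -IM_spec mem_iota. apply/idP/idP.
  - by case/andP.
  - move=> Hb. rewrite Hb /=. move: Hb => /mapP [y Hy ->].
    rewrite mem_iota add0n in Hy. move: Hy => /andP [_ Hy].
    have := g_gt Hy; have := g_le_n (ltnW Hy); lia.
have := perm_size (uniq_perm Hu1 Hu2 Heq). rewrite size_map size_filter => Hc.
have := count_predC (mem IM) (iota 1 n). rewrite size_iota Hc.
have := size_FF_NI. rewrite /IN size_filter.
have -> : count (fun b => b \notin IM) (iota 1 n) = count (predC (mem IM)) (iota 1 n) by [].
move=> A B. apply/eqP. by rewrite -(eqn_add2l (size FF)) B A.
Qed.

Lemma NI_cover b : b \in IN -> exists x, [/\ 0 < x, x < n, g x.-1 = g x & wch x d = b].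
Proof.
move=> Hb.
have HNI : forall x, x \in NI -> [/\ 0 < x, x < n & g x.-1 = g x].
  move=> x. rewrite NI_spec => /and3P [H1 H2 /eqP H3]. by split.
have Hu : uniq [seq wch x d | x <- NI].
  rewrite map_inj_in_uniq ?filter_uniq ?iota_uniq //.
  move=> x1 x2 H1 H2 E.
  have [a1 b1 c1] := HNI _ H1. have [a2 b2 c2] := HNI _ H2.
  by rewrite -(Phi_back a1 b1 c1) E (Phi_back a2 b2 c2).
have Hsub : {subset [seq wch x d | x <- NI] <= IN}.
  move=> b' /mapP [x Hx ->]. have [a1 b1 c1] := HNI _ Hx.
  rewrite /IN mem_filter mem_iota. have := Phi_range a1 b1 c1.
  move=> Hr. apply/andP; split.
    apply/mapP => [[y _ Hy]]. have := Phi_notim a1 b1 c1 y. by rewrite Hy eqxx.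
  lia.
have Hs : size IN <= size [seq wch x d | x <- NI] by rewrite size_map size_IN.
have [_ Heq] := uniq_min_size Hu Hsub Hs.
move: Hb; rewrite -Heq => /mapP [x Hx ->]. have [a1 b1 c1] := HNI _ Hx.
by exists x.
Qed.

Section NI2.
Variable x : nat.
Hypothesis Hx0 : 0 < x.
Hypothesis Hxn : x < n.
Hypothesis Hxg : g x.-1 = g x.
Local Notation w := (wch x).

Lemma odd_char k y : k <= r -> (w k.*2.+1 <= y) = (x <= gi k y).
Proof.
elim: k y => [//|k IH] y Hk.
rewrite doubleS wchSS h_adj; last first.
  rewrite (wpos Hx0 Hxn Hxg) ?wlen //. have := dE; lia.
by rewrite IH ?iterSr //; lia.
Qed.

Lemma even_char k y : k <= r -> (w k.*2 <= y) = (g x <= gi k y).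
Proof.
elim: k y => [//|k IH] y Hk.
rewrite doubleS wchSS h_adj; last first.
  rewrite (wpos Hx0 Hxn Hxg) ?wlen //. have := dE; lia.
by rewrite IH ?iterSr //; lia.
Qed.

Lemma ych_w i : i <= d.+1 -> ych (w d.+1) (w d) i = w (d.+1 - i).
Proof.
elim: i {-2}i (leqnn i) => [|k IH] [|[|i]] Hi Hd //=.
- by rewrite subn1.
- rewrite -/(ych (w d.+1) (w d) i) IH; [|lia|lia].
  have := F2 Hx0 Hxn Hxg (k := d.+1 - i.+2). 
  have -> : (d.+1 - i.+2).+2 = d.+1 - i by lia.
  apply. lia.
Qed.

End NI2.

Lemma pd_first p q : p < n -> p < q -> q <= g p ->
  exists i0, [/\ i0 <= d, pd c (p, q - p) = i0, ych p q i0.+2 <= ych p q i0.+1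
    & forall i, i < i0 -> ych p q i.+1 < ych p q i.+2].
Proof.
move=> Hp Hpq Hq.
have Hex : exists i, ych p q i.+2 <= ych p q i.+1.
  have [i [_ H]] := gl_exists Hp Hpq Hq. by exists i.
have [i0 Hi0 Hmin] := ex_minnP Hex.
have [i1 [Hi1 H1]] := gl_exists Hp Hpq Hq.
have Hle := Hmin _ H1.
have Hlt : forall i, i < i0 -> ych p q i.+1 < ych p q i.+2.
  move=> i Hi. rewrite ltnNge. apply/negP => H. have := Hmin _ H. lia.
exists i0; split => //; first by lia.
apply: pdE => //.
- by rewrite syzE ?(ltnW Hpq) // strictS ltnNge Hi0 andbF.
- rewrite syzE ?(ltnW Hpq) //.
  have -> : strict p q i0 by apply/strictP.
  by [].
Qed.

Lemma simpleE v : simple v = (v, v.+1 - v).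
Proof. by rewrite /simple subSnn. Qed.

Lemma g_succ v : v < n -> v.+1 <= g v.
Proof. exact: g_gt. Qed.

Section Main.
Variable x : nat.
Hypothesis Hx0 : 0 < x.
Hypothesis Hxn : x < n.
Hypothesis Hxg : g x.-1 = g x.
Local Notation w := (wch x).
Local Notation T := (w d.+1).
Local Notation Q := (w d).
Hypothesis HL : T.+1 < Q.

Lemma giQ m : m <= r -> gi m Q = w (d - m.*2).
Proof. move=> Hm. rewrite (gi_w' Hx0 Hxn Hxg) //; have := dE; lia. Qed.

Lemma giT m : m <= r -> gi m T = w (d.+1 - m.*2).
Proof. move=> Hm. rewrite (gi_w' Hx0 Hxn Hxg) //; have := dE; lia. Qed.

Lemma Qpos : 0 < Q <= n.
Proof. exact: (Phi_range Hx0 Hxn Hxg). Qed.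

Lemma wF1 i : i <= d -> w i.+1 < w i.
Proof. move=> Hi. exact: (F1 Hx0 Hxn Hxg (leqnn d) Hi). Qed.

Lemma Qm1_lt m : m <= r -> gi m Q.-1 < gi m Q.
Proof.
elim: m => [|m IH] Hm.
  have := Qpos. rewrite /=. lia.
have IH' := IH (ltnW Hm).
have Hk : d - m.*2 = (d - m.+1.*2).+2 by have := dE; rewrite doubleS; lia.
have Hkd : d - m.+1.*2 < d by lia.
set k := d - m.+1.*2 in Hk Hkd *.
have E1 : gi m Q = h (w k) by rewrite giQ ?Hk //; lia.
have E2 : gi m.+1 Q = w k by rewrite iterS E1 -wchSS (F2 Hx0 Hxn Hxg).
have Hpos : 0 < w k <= n by apply/andP; split; [apply: (wpos Hx0 Hxn Hxg); lia | exact: wlen].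
rewrite E2 iterS. rewrite E1 in IH'. rewrite ltnNge; apply/negP => Hg.
have : h (w k) <= gi m Q.-1 by rewrite h_adj.
lia.
Qed.

Lemma gT : g T = w d.-1.
Proof. exact: (E1 Hx0 Hxn Hxg). Qed.

Lemma Q_lt_gT : Q < g T.
Proof. rewrite gT. exact: (L1 Hx0 Hxn Hxg). Qed.

Lemma Tn : T < n.
Proof. have := Qpos. lia. Qed.

Lemma ychTQ i : i <= d.+1 -> ych T Q i = w (d.+1 - i).
Proof. exact: (ych_w Hx0 Hxn Hxg). Qed.

Lemma pdI : pd c (T, Q - T) = d.
Proof.
apply: pdE; [exact: Tn|lia|exact: ltnW Q_lt_gT| |].
- apply: Hgl. apply: valid_pair; [exact: Tn|lia|exact: ltnW Q_lt_gT].
- rewrite syzE; last by lia.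
  have -> : strict T Q d.
    apply/strictP => i Hi. rewrite !ychTQ; [|lia|lia].
    have := wF1 (i := d.+1 - i.+2). 
    have -> : (d.+1 - i.+2).+1 = d.+1 - i.+1 by lia.
    apply. lia.
  by [].
Qed.

Lemma giT_gt m y : m < r -> T <= y -> gi m Q < gi m.+1 y.
Proof.
move=> Hm Hy. apply: (@leq_trans (gi m.+1 T)); last exact: gi_mono.
rewrite giQ ?(ltnW Hm) // giT //.
have := wF1 (i := d.+1 - m.+1.*2). rewrite doubleS.
have -> : (d.+1 - m.*2.+2).+1 = d - m.*2 by have := dE; lia.
apply. lia.
Qed.

Lemma gi_r1 y : T <= y -> gi r Q <= gi r.+1 y.
Proof.
move=> Hy. apply: (@leq_trans (gi r.+1 T)); last exact: gi_mono.
rewrite giQ // iterS giT //.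
have -> : d - r.*2 = 0 by have := dE; lia.
have -> : d.+1 - r.*2 = 1 by have := dE; lia.
by [].
Qed.

Lemma pdS_top : pd c (simple Q.-1) = d.
Proof.
have HQ := Qpos.
rewrite simpleE prednK; last by lia.
have Hn' : Q.-1 < n by lia.
have HQ0 : 0 < Q by lia.
have HQg : Q <= g Q.-1 by have := g_succ Hn'; rewrite (prednK HQ0).
apply: pdE.
- exact: Hn'.
- lia.
- exact: HQg.
- apply: Hgl. apply: valid_pair => //. lia.
- rewrite syzE; last by lia.
  have -> : strict Q.-1 Q d.
    apply/strictP => i Hi.
    have [m [Em|Em]] := par i; subst i.
    + rewrite ychSS ych_odd ych_even -iterS. apply: giT_gt; [|lia].
      have := dE; lia.
    + rewrite !ychSS ych_odd ych_even -!iterS. apply: Qm1_lt.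
      have := dE; lia.
  by [].
Qed.


Lemma pdS_odd j : T <= j -> j.+1 < Q -> exists m,
  [/\ m < r, pd c (simple j) = m.*2.+1, gi m j < gi m j.+1 & gi m.+1 j = gi m.+1 j.+1].
Proof.
move=> H1 H2. have HQ := Qpos. have Hjn : j < n by lia.
rewrite simpleE.
have [i0 [Hi0 Hpd Hcol Hst]] := pd_first Hjn (ltnSn j) (g_succ Hjn).
have [m [Em|Em]] := par i0; rewrite {}Em in Hi0 Hpd Hcol Hst.
- exfalso. move: Hcol. rewrite ychSS ych_odd ych_even -iterS.
  case: (ltnP m r) => Hm.
  + have := giT_gt Hm H1. have : gi m j.+1 <= gi m Q by apply: gi_mono; lia. lia.
  + have Hmr : m = r by have := dE; lia. subst m.
    have := gi_r1 H1. have := Qm1_lt (leqnn r).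
    have : gi r j.+1 <= gi r Q.-1 by apply: gi_mono; lia. lia.
- exists m. have Hm : m < r by have := dE; lia.
  move: Hcol. rewrite !ychSS ych_odd ych_even => Hcol.
  have Hcol' : gi m.+1 j = gi m.+1 j.+1.
    rewrite !iterS. apply/eqP; rewrite eqn_leq Hcol andbT. apply: g_mono. exact: gi_mono.
  split => //.
  case: m Hi0 Hpd Hm Hst Hcol Hcol' => [//|m] Hi0 Hpd Hm Hst Hcol Hcol'.
  have H : ych j j.+1 m.*2.+2 < ych j j.+1 m.*2.+3 by apply: Hst; rewrite doubleS; lia.
  move: H. by rewrite !ychSS ych_odd ych_even -!iterS.
Qed.


Lemma NI_of a b : a < b -> g a = g b -> b < n -> [/\ 0 < b, b < n & g b.-1 = g b].
Proof.
move=> Hab Hg Hb. split => //; first by lia.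
apply/eqP; rewrite eqn_leq g_mono ?leq_pred //= -Hg. apply: g_mono. lia.
Qed.

Lemma pdS_order j : T <= j -> j.+2 < Q -> pd c (simple j.+1) < pd c (simple j).
Proof.
move=> H1 H2. have HQ := Qpos.
have [m [Hm Hpd Hlt Hcol]] := pdS_odd H1 (ltnW H2).
have [m' [Hm' Hpd' Hlt' Hcol']] := pdS_odd (leqW H1) H2.
rewrite Hpd Hpd' ltnS ltn_double ltnNge. apply/negP => Hmm.
set b := gi m j.+1. set b' := gi m' j.+2.
have Hbn : b < n.
  have := Qm1_lt (ltnW Hm).
  have : b <= gi m Q.-1 by apply: gi_mono; lia.
  have : gi m Q <= n by apply: gi_le_n; lia. lia.
have Hbn' : b' < n.
  have := Qm1_lt (ltnW Hm').
  have : b' <= gi m' Q.-1 by apply: gi_mono; lia.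
  have : gi m' Q <= n by apply: gi_le_n; lia. lia.
have [b0 bn bg] := NI_of Hlt (etrans (esym (iterS _ _ _)) (etrans Hcol (iterS _ _ _))) Hbn.
have [b0' bn' bg'] := NI_of Hlt' (etrans (esym (iterS _ _ _)) (etrans Hcol' (iterS _ _ _))) Hbn'.
set s0 := r - m'.+1.
set U := wch b (m + s0).*2.+1.
set V := wch b' (m' + s0).*2.+1.
have EV : (m' + s0).*2.+1 = d.-1 by have := dE; rewrite /s0; lia.
have Wb : wch b m.*2.+1 = j.+1.
  apply/eqP; rewrite eqn_leq (odd_char b0 bn bg) ?leqnn; last by lia.
  rewrite /= ltnNge (odd_char b0 bn bg); last by lia.
  by rewrite -ltnNge.
have Wb' : wch b' m'.*2.+1 = j.+2.
  apply/eqP; rewrite eqn_leq (odd_char b0' bn' bg') ?leqnn; last by lia.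
  rewrite /= ltnNge (odd_char b0' bn' bg'); last by lia.
  by rewrite -ltnNge.
have HU : gi s0 U = j.+1.
  rewrite /U -Wb -(gi_w b0 bn bg (m:=s0) (k:=m.*2.+1)); last by have := dE; rewrite /s0; lia.
  congr (gi s0 (wch b _)). rewrite doubleD. lia.
have HV : gi s0 V = j.+2.
  rewrite /V -Wb' -(gi_w b0' bn' bg' (m:=s0) (k:=m'.*2.+1)); last by have := dE; rewrite /s0; lia.
  congr (gi s0 (wch b' _)). rewrite doubleD. lia.
have Hr : r = m'.+1 + s0 by rewrite /s0; lia.
have C1 : wch b' d <= U.
  have -> : d = r.*2 by exact: dE.
  rewrite (even_char b0' bn' bg') // Hr iterD HU.
  by rewrite /b' -iterS -Hcol' iterS.
have C2 : U <= V.
  rewrite /U (odd_char b0 bn bg); last by rewrite /s0; lia.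
  rewrite iterD HV /b. apply: gi_mono. lia.
have F3' := F3 b0' bn' bg'.
have Hd1 : wch b' d.+1 = h V.
  rewrite /V EV. by rewrite -wchSS prednK.
have Pd : 0 < wch b' d by apply: (wpos b0' bn' bg').
have Vn : V <= n by apply: wlen.
have Upos : 0 < U by lia.
have Un : U <= n by apply: wlen.
have A1 : h U <= h V := h_mono Upos C2 Vn.
have A2 : h V <= h U by rewrite -Hd1 -F3'; exact: h_mono Pd C1 Un.
have HhU : h U = h V by apply/eqP; rewrite eqn_leq A1 A2.
have G1 : g (h U) = U.
  have := F2 b0 bn bg (k := (m + s0).*2.+1). rewrite wchSS. apply.
  have := dE; rewrite /s0; lia.
have G2 : g (h V) = V.
  have := F2 b0' bn' bg' (k := (m' + s0).*2.+1). rewrite wchSS. apply.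
  have := dE; rewrite /s0; lia.
have : U = V by rewrite -G1 HhU G2.
move=> E. move: HU. rewrite E HV. lia.
Qed.

End Main.

Lemma sorted_iota_map (f : nat -> nat) a k :
  (forall i, a <= i -> i.+1 < a + k -> f i < f i.+1) -> sorted ltn [seq f i | i <- iota a k].
Proof.
elim: k a => [//|k IH] a H.
case: k IH H => [//|k] IH H.
rewrite /= -/(path ltn (f a.+1) [seq f i | i <- iota a.+2 k]).
apply/andP; split; first by apply: H; lia.
have := IH a.+1. rewrite /=. apply=> i H1 H2. apply: H; lia.
Qed.

Lemma inj_h t l : valid c (t, l) -> is_inj c (t, l) -> h (t + l) = t.
Proof.
rewrite /valid /is_inj /= => /andP [Ht /andP [Hl0 Hl]] Hi.
have Hq : 0 < t + l <= n by have := g_le_n (ltnW Ht); rewrite /g; lia.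
have A : h (t + l) <= t by rewrite h_adj // /g leq_add2l.
apply/eqP; rewrite eqn_leq A /=.
case: t Ht Hl Hi Hq A => [//|t] Ht Hl Hi Hq A.
rewrite ltnNge h_adj // /g. move: Hi => /orP [//|Hi]. rewrite /= in Hi. lia.
Qed.

Lemma main_in t l : valid c (t, l) -> is_inj c (t, l) -> ~~ is_proj c (t, l) -> 2 <= l ->
  pd c (t, l) = d /\ plus_strictly_increasing c (t, l) /\ head 0 (charz c (t, l)) = d.
Proof.
move=> Hv Hi Hp Hl.
have Hh := inj_h Hv Hi.
move: Hv Hp; rewrite /valid /is_proj /= => /andP [Ht /andP [Hl0 Hlk]] Hp.
have Hq : 0 < t + l <= n by have := g_le_n (ltnW Ht); rewrite /g; lia.
have HIN : t + l \in IN.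
  rewrite /IN mem_filter mem_iota. apply/andP; split; last by lia.
  apply/mapP => [[y Hy Ey]].
  have H1 : h (t + l) <= y by rewrite h_adj // Ey.
  have H2 : t + l <= g (h (t + l)) by apply: h_g.
  have H3 : g (h (t + l)) <= g y by apply: g_mono.
  move: Hp; rewrite Hh in H2 H3; rewrite /g in H2 H3 Ey *. lia.
have [x [Hx0 Hxn Hxg Hw]] := NI_cover HIN.
have HT : wch x d.+1 = t by rewrite -(F3 Hx0 Hxn Hxg) Hw.
have HL : (wch x d.+1).+1 < wch x d by rewrite HT Hw; lia.
have El : l = wch x d - wch x d.+1 by rewrite HT Hw; lia.
have Hpd : pd c (t, l) = d.
  rewrite {1}El -{1}HT. exact: (pdI Hx0 Hxn Hxg HL).
have Ez : charz c (t, l) = d :: [seq pd c (simple (t + l - i)) | i <- iota 2 l.-1].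
  rewrite /charz /=.
  have -> : iota 1 l = 1 :: iota 2 l.-1 by rewrite -{1}(prednK Hl0).
  rewrite /=. congr cons.
    have -> : t + l - 1 = (wch x d).-1 by rewrite Hw; lia.
    rewrite (pdS_top Hx0 Hxn Hxg HL) (negbTE Hev). by rewrite Hpd.
  apply/eq_in_map => i. rewrite mem_iota => Hi2.
  have H1 : wch x d.+1 <= t + l - i by rewrite HT; lia.
  have H2 : (t + l - i).+1 < wch x d by rewrite Hw; lia.
  have [m [_ Hm _ _]] := pdS_odd Hx0 Hxn Hxg HL H1 H2.
  by rewrite Hm /= odd_double.
have Hodd : forall i, 2 <= i <= l -> exists m, m < r /\ pd c (simple (t + l - i)) = m.*2.+1.
  move=> i Hi2.
  have H1 : wch x d.+1 <= t + l - i by rewrite HT; lia.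
  have H2 : (t + l - i).+1 < wch x d by rewrite Hw; lia.
  have [m [Hmr Hm _ _]] := pdS_odd Hx0 Hxn Hxg HL H1 H2.
  by exists m.
split => //. rewrite Ez. split => //.
rewrite /plus_strictly_increasing Ez /= (negbTE Hev) /=.
apply/and3P; split.
- apply/allP => v /mapP [i]. rewrite mem_iota => Hi2 ->.
  have Hi' : 2 <= i <= l by lia.
  have [m [_ ->]] := Hodd i Hi'. by rewrite /= odd_double.
- apply: sorted_iota_map => i Hi2 Hi3.
  have E : t + l - i = (t + l - i.+1).+1 by lia.
  rewrite E. apply: (pdS_order Hx0 Hxn Hxg HL); rewrite ?HT ?Hw; lia.
- apply/allP => v /mapP [i]. rewrite mem_iota => Hi2 ->.
  have Hi' : 2 <= i <= l by lia.
  have [m [Hmr ->]] := Hodd i Hi'.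
  have := dE. lia.
Qed.
End Basics.

Theorem proposition8p3 (c : seq nat) (d : nat) (I : module) :
  kupisch_series c -> ~~ odd d -> concave c -> higher_auslander c d ->
  valid c I -> is_inj c I -> ~~ is_proj c I -> 2 <= mlength I ->
  pd c I = d /\ plus_strictly_increasing c I /\ head 0 (charz c I) = d.
Proof.
move=> Kc Hev _ [[Hgl _] [Hdom _]].
case: I => t l Hv Hi Hp Hl.
case: (posnP d) => Hd0.
  exfalso. subst d. have := Hgl _ Hv. rewrite /syz /= /omega /=.
  move: Hv Hp; rewrite /valid /is_proj /= => /andP [_ /andP [_ Hlk]] Hp.
  case: ifP => // H _. move: Hp H. lia.
exact: (main_in Kc Hgl Hdom Hev Hd0 Hv Hi Hp Hl).
Qed.
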